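(* For a fixed discrete memoryless MAC $p(y|x_1,x_2)$, define for $C_1,C_2\ge 0$ $$f_\ell(C_1,C_2)=\max_{p(u,x_1,x_2)}\min\left\{\begin{array}{l} C_1+C_2-I(X_1;X_2|U),\\ C_2+I(X_1;Y|X_2U),\\ C_1+I(X_2;Y|X_1U),\\ \tfrac12\big(C_1+C_2+I(X_1X_2;Y|U)-I(X_1;X_2|U)\big),\\ I(X_1X_2;Y)\end{array}\right\},$$ where the maximum is over pmfs $p(u,x_1,x_2)$ on $\mathcal U\times\mathcal X_1\times\mathcal X_2$ with $U$ taking values in a finite set with $|\mathcal{U}|\le \min\{|\mathcal{X}_1||\mathcal{X}_2|+3,|\mathcal{Y}|+4\}$, and the information quantities are evaluated for $p(u,x_1,x_2)p(y|x_1,x_2)$. Then $f_\ell$ is concave in $(C_1,C_2)$.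
   Context: $f_\ell(C_1,C_2)$ is the achievable rate (lower bound on capacity) of a two-relay diamond network whose broadcast part consists of two orthogonal error-free bit-pipes of capacities $C_1,C_2$ and whose second hop is the MAC $p(y|x_1,x_2)$ with finite alphabets $\mathcal X_1,\mathcal X_2,\mathcal Y$. Logarithms are base 2. *)

(* Defs.v *)
From Stdlib Require Import Reals ClassicalEpsilon.
From mathcomp Require Import all_boot.
Set Implicit Arguments. Unset Strict Implicit. Unset Printing Implicit Defensive.
Local Open Scope R_scope.

Definition log2 (x : R) : R := ln x / ln 2.
(* x log2 x with the convention 0 log 0 = 0 *)
Definition nlogn (x : R) : R := if Rlt_dec 0 x then x * log2 x else 0.

Definition rsum (T : finType) (f : T -> R) : R := \big[Rplus/0]_(t : T) f t.

(* entropy H(g(T)) of the random variable g : T -> S, where T has pmf P *)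
Definition ent (T S : finType) (P : T -> R) (g : T -> S) : R :=
  - rsum (fun s : S => nlogn (rsum (fun t : T => if g t == s then P t else 0))).

Definition cmi (T A B C : finType) (P : T -> R)
    (a : T -> A) (b : T -> B) (c : T -> C) : R :=
  ent P (fun t => (a t, c t)) + ent P (fun t => (b t, c t))
  - ent P (fun t => (a t, b t, c t)) - ent P c.

Definition is_channel (X1 X2 Y : finType) (W : X1 -> X2 -> Y -> R) : Prop :=
  (forall x1 x2 y, 0 <= W x1 x2 y) /\ (forall x1 x2, rsum (W x1 x2) = 1).

Definition is_pmf3 (U X1 X2 : finType) (p : U -> X1 -> X2 -> R) : Prop :=
  (forall u x1 x2, 0 <= p u x1 x2) /\
  rsum (fun t : (U * X1 * X2)%type => p t.1.1 t.1.2 t.2) = 1.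

Definition joint (U X1 X2 Y : finType) (p : U -> X1 -> X2 -> R)
    (W : X1 -> X2 -> Y -> R) (t : (U * X1 * X2 * Y)%type) : R :=
  p t.1.1.1 t.1.1.2 t.1.2 * W t.1.1.2 t.1.2 t.2.

Definition fl_objective (U X1 X2 Y : finType) (W : X1 -> X2 -> Y -> R)
    (p : U -> X1 -> X2 -> R) (C1 C2 : R) : R :=
  let P := joint p W in
  let u  := fun t : (U * X1 * X2 * Y)%type => t.1.1.1 in
  let x1 := fun t : (U * X1 * X2 * Y)%type => t.1.1.2 in
  let x2 := fun t : (U * X1 * X2 * Y)%type => t.1.2 in
  let y  := fun t : (U * X1 * X2 * Y)%type => t.2 in
  let x12 := fun t => (x1 t, x2 t) in
  let none := fun _ : (U * X1 * X2 * Y)%type => tt in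
  Rmin (C1 + C2 - cmi P x1 x2 u)
  (Rmin (C2 + cmi P x1 y (fun t => (x2 t, u t)))
  (Rmin (C1 + cmi P x2 y (fun t => (x1 t, u t)))
  (Rmin ((C1 + C2 + cmi P x12 y u - cmi P x1 x2 u) / 2)
        (cmi P x12 y none)))).

Definition fl_values (X1 X2 Y : finType) (W : X1 -> X2 -> Y -> R) (C1 C2 : R)
    : R -> Prop :=
  fun v => exists k : nat,
    (k <= minn (#|X1| * #|X2| + 3) (#|Y| + 4))%N /\
    exists p : 'I_k -> X1 -> X2 -> R, is_pmf3 p /\ v = fl_objective W p C1 C2.

(* supremum (classically chosen least upper bound) of a set of reals;
   for f_l this supremum is attained, i.e. it is the max of the paper *)
Definition Rsup (E : R -> Prop) : R := epsilon (inhabits 0) (fun l => is_lub E l).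

Definition f_l (X1 X2 Y : finType) (W : X1 -> X2 -> Y -> R) (C1 C2 : R) : R :=
  Rsup (fl_values W C1 C2).

(* Main.v *)
Require Import Defs.
From Stdlib Require Import Reals Lra ClassicalEpsilon FunctionalExtensionality PropExtensionality Classical.
From mathcomp Require Import all_boot all_algebra.
From mathcomp Require Import Rstruct.
Set Implicit Arguments. Unset Strict Implicit. Unset Printing Implicit Defensive.
Local Open Scope R_scope.

Lemma ln_le1 x : 0 < x -> ln x <= x - 1.
Proof. intro H. have := exp_ineq1_le (ln x). rewrite exp_ln //. lra. Qed.

Lemma ln2_pos : 0 < ln 2.
Proof. rewrite -ln_1. apply ln_increasing; lra. Qed.

Lemma nlogn0 : nlogn 0 = 0.
Proof. rewrite /nlogn. case: Rlt_dec => //= H; lra. Qed.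

Lemma nlognE x : 0 < x -> nlogn x = x * (ln x / ln 2).
Proof. rewrite /nlogn /log2. case: Rlt_dec => //. Qed.

Lemma nlogn_scale c x : 0 <= c -> 0 <= x -> nlogn (c * x) = c * nlogn x + x * nlogn c.
Proof.
move=> Hc Hx.
case: (Req_dec c 0) => [->|Hc0]. rewrite Rmult_0_l nlogn0; lra.
case: (Req_dec x 0) => [->|Hx0]. rewrite Rmult_0_r nlogn0; lra.
have Hc' : 0 < c by lra. have Hx' : 0 < x by lra.
rewrite !nlognE //; last by apply Rmult_lt_0_compat.
rewrite ln_mult //. field. apply Rgt_not_eq, ln2_pos.
Qed.

Lemma nlogn_tangent m x : 0 < m -> 0 <= x ->
  nlogn m + ((ln m + 1) / ln 2) * (x - m) <= nlogn x.
Proof.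
move=> Hm Hx. have H2 := ln2_pos.
suff : m * ln m + (ln m + 1) * (x - m) <= (if Rlt_dec 0 x then x * ln x else 0).
  rewrite (nlognE Hm) {1}/nlogn /log2. case: Rlt_dec => Hx' H; simpl in *.
  - apply (Rmult_le_reg_r (ln 2)) => //.
    have -> : (m * (ln m / ln 2) + (ln m + 1) / ln 2 * (x - m)) * ln 2 =
               m * ln m + (ln m + 1) * (x - m) by field; lra.
    have -> : x * (ln x / ln 2) * ln 2 = x * ln x by field; lra.
    done.
  - apply (Rmult_le_reg_r (ln 2)) => //.
    have -> : (m * (ln m / ln 2) + (ln m + 1) / ln 2 * (x - m)) * ln 2 =
               m * ln m + (ln m + 1) * (x - m) by field; lra.
    simpl; lra.
case: Rlt_dec => Hx'.
- have := ln_le1 (Rdiv_lt_0_compat _ _ Hm Hx').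
  rewrite /Rdiv ln_mult // ?ln_Rinv //; last by apply Rinv_0_lt_compat.
  move=> H.
  have : x * (ln m - ln x) <= x * (m * / x - 1) by apply Rmult_le_compat_l; lra.
  have -> : x * (m * / x - 1) = m - x by field; lra.
  move=> H1. simpl. ring_simplify. ring_simplify in H1. lra.
- simpl. have -> : x = 0 by lra. lra.
Qed.

Lemma nlogn_convex l a b : 0 <= l <= 1 -> 0 <= a -> 0 <= b ->
  nlogn (l * a + (1 - l) * b) <= l * nlogn a + (1 - l) * nlogn b.
Proof.
move=> Hl Ha Hb.
have Hm : 0 <= l * a + (1 - l) * b.
  have := Rmult_le_pos _ _ (proj1 Hl) Ha. have : 0 <= 1 - l by lra.
  move=> H1 H2. have := Rmult_le_pos _ _ H1 Hb. lra.
case: (Req_dec (l * a + (1 - l) * b) 0) => [E|Ne].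
- rewrite E nlogn0.
  have H1 : l * a = 0.
    have := Rmult_le_pos _ _ (proj1 Hl) Ha. have : 0 <= 1 - l by lra.
    move=> H1 H2. have := Rmult_le_pos _ _ H1 Hb. lra.
  have H2 : (1 - l) * b = 0 by lra.
  have E1 : l * nlogn a = 0.
    case: (Rmult_integral _ _ H1) => ->; rewrite ?nlogn0; ring.
  have E2 : (1 - l) * nlogn b = 0.
    case: (Rmult_integral _ _ H2) => ->; rewrite ?nlogn0; ring.
  lra.
- set m := l * a + (1 - l) * b in Hm Ne *.
  have Hm' : 0 < m by lra.
  have Ta := nlogn_tangent Hm' Ha. have Tb := nlogn_tangent Hm' Hb.
  set s := (ln m + 1) / ln 2 in Ta Tb.
  have A1 := Rmult_le_compat_l _ _ _ (proj1 Hl) Ta.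
  have : 0 <= 1 - l by lra. move=> Hl'.
  have A2 := Rmult_le_compat_l _ _ _ Hl' Tb.
  have E : l * (nlogn m + s * (a - m)) + (1 - l) * (nlogn m + s * (b - m)) = nlogn m.
    rewrite /m; ring.
  lra.
Qed.

Lemma nlogn_lower x : 0 <= x -> - nlogn x <= / ln 2.
Proof.
move=> Hx. have H2 := ln2_pos. have Hi : 0 < / ln 2 by apply Rinv_0_lt_compat.
rewrite /nlogn /log2; case: Rlt_dec => Hx' /=; last lra.
have := ln_le1 (Rinv_0_lt_compat _ Hx'). rewrite ln_Rinv // => H.
have : x * (- ln x) <= x * (/ x - 1) by apply Rmult_le_compat_l; lra.
have -> : x * (/ x - 1) = 1 - x by field; lra.
move=> H3.
have -> : - (x * (ln x / ln 2)) = (x * - ln x) * / ln 2 by field; lra.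
have : x * - ln x <= 1 by lra. move=> H4.
have := Rmult_le_compat_r _ _ _ (Rlt_le _ _ Hi) H4. lra.
Qed.

Lemma nlogn_le0 w : 0 <= w <= 1 -> nlogn w <= 0.
Proof.
move=> Hw. rewrite /nlogn /log2; case: Rlt_dec => Hw' /=; last lra.
have := ln_le1 Hw'. move=> H. have H2 := ln2_pos.
have : ln w / ln 2 <= 0.
  rewrite /Rdiv. have := Rinv_0_lt_compat _ H2 => Hi.
  have : ln w <= 0 by lra. move=> H3. 
  have := Rmult_le_compat_r _ _ _ (Rlt_le _ _ Hi) H3. lra.
move=> H4. have := Rmult_le_compat_l _ _ _ (Rlt_le _ _ Hw') H4. lra.
Qed.

Lemma rsum_ext (T : finType) (F G : T -> R) : (forall t, F t = G t) -> rsum F = rsum G.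
Proof. move=> H; rewrite /rsum; apply: eq_bigr => t _; exact: H. Qed.
Lemma rsum_add (T : finType) (F G : T -> R) : rsum (fun t => F t + G t) = rsum F + rsum G.
Proof. by rewrite /rsum big_split. Qed.
Lemma rsum_scal (T : finType) (c : R) (F : T -> R) : rsum (fun t => c * F t) = c * rsum F.
Proof. by rewrite /rsum big_distrr. Qed.
Lemma rsum_scalr (T : finType) (c : R) (F : T -> R) : rsum (fun t => F t * c) = rsum F * c.
Proof. by rewrite /rsum big_distrl. Qed.
Lemma rsum_opp (T : finType) (F : T -> R) : rsum (fun t => - F t) = - rsum F.
Proof.
rewrite /rsum. apply: esym. apply: (big_morph (fun x => - x)).
- move=> x y; ring.
- ring.
Qed.
Lemma rsum_sub (T : finType) (F G : T -> R) : rsum (fun t => F t - G t) = rsum F - rsum G.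
Proof. rewrite /Rminus rsum_add rsum_opp. done. Qed.
Lemma rsum0 (T : finType) : rsum (fun _ : T => 0) = 0.
Proof. by rewrite /rsum big1. Qed.
Lemma rsum0' (T : finType) (F : T -> R) : (forall t, F t = 0) -> rsum F = 0.
Proof. move=> H; rewrite /rsum big1 // => t _; exact: H. Qed.
Lemma rsum_exch (A B : finType) (F : A -> B -> R) :
  rsum (fun a => rsum (fun b => F a b)) = rsum (fun b => rsum (fun a => F a b)).
Proof. by rewrite /rsum exchange_big. Qed.
Lemma rsum_pair (A B : finType) (F : A * B -> R) :
  rsum F = rsum (fun a => rsum (fun b => F (a, b))).
Proof. rewrite /rsum pair_big. apply: eq_bigr => -[a b] _. done. Qed.
Lemma rsum_le (T : finType) (F G : T -> R) : (forall t, F t <= G t) -> rsum F <= rsum G.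
Proof.
move=> H; rewrite /rsum. apply: (big_ind2 (fun x y => x <= y)) => //.
- lra.
- move=> *; lra.
Qed.
Lemma rsum_ge0 (T : finType) (F : T -> R) : (forall t, 0 <= F t) -> 0 <= rsum F.
Proof. move=> H. rewrite -(rsum0 T). by apply: rsum_le. Qed.
Lemma rsum_if_eq (T : finType) (t0 : T) (F : T -> R) :
  rsum (fun t => if t == t0 then F t else 0) = F t0.
Proof. by rewrite /rsum -big_mkcond big_pred1_eq. Qed.
Lemma rsum_if_eq' (T : finType) (t0 : T) (F : T -> R) :
  rsum (fun t => if t0 == t then F t else 0) = F t0.
Proof. rewrite -(rsum_if_eq t0 F). apply: rsum_ext => t. by rewrite eq_sym. Qed.
Lemma rsum_term (T : finType) (F : T -> R) t0 : (forall t, 0 <= F t) -> F t0 <= rsum F.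
Proof.
move=> H. rewrite /rsum (bigD1 t0) //=.
have : 0 <= \big[Rplus/0]_(i | i != t0) F i.
  apply: (big_ind (fun x => 0 <= x)) => //; [lra | move=> *; lra].
lra.
Qed.
Lemma rsum_eq0_term (T : finType) (F : T -> R) t0 :
  (forall t, 0 <= F t) -> rsum F = 0 -> F t0 = 0.
Proof. move=> H H0. have := rsum_term t0 H. have := H t0. lra. Qed.

Lemma rsum_ord_split n1 n2 (F : 'I_(n1 + n2) -> R) :
  rsum F = rsum (fun i => F (lshift n2 i)) + rsum (fun j => F (rshift n1 j)).
Proof. by rewrite /rsum big_split_ord. Qed.
Lemma rsum_ord_D1 n (F : 'I_n.+1 -> R) i0 :
  rsum F = F i0 + rsum (fun j => F (lift i0 j)).
Proof. by rewrite /rsum (bigD1_ord i0). Qed.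
Lemma rsum_unit (F : unit -> R) : rsum F = F tt.
Proof. rewrite -(rsum_if_eq tt F). apply: rsum_ext => -[] //. Qed.

Definition push (T S : finType) (P : T -> R) (g : T -> S) (s : S) : R :=
  rsum (fun t => if g t == s then P t else 0).

Lemma entE (T S : finType) (P : T -> R) (g : T -> S) :
  ent P g = - rsum (fun s => nlogn (push P g s)).
Proof. by []. Qed.

Lemma ent_push (T T' S : finType) (P : T -> R) (P' : T' -> R) (g : T -> S) (g' : T' -> S) :
  (forall s, push P g s = push P' g' s) -> ent P g = ent P' g'.
Proof. move=> H. rewrite !entE. f_equal. apply: rsum_ext => s. by rewrite H. Qed.

Lemma push_sum (T S : finType) (P : T -> R) (g : T -> S) :
  rsum (push P g) = rsum P.
Proof.
rewrite /push rsum_exch. apply: rsum_ext => t. by rewrite rsum_if_eq'.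
Qed.

Lemma push_ge0 (T S : finType) (P : T -> R) (g : T -> S) s :
  (forall t, 0 <= P t) -> 0 <= push P g s.
Proof. move=> H. apply: rsum_ge0 => t. case: eqP => _; [exact: H | lra]. Qed.

Lemma ent_inj (T S S' : finType) (P : T -> R) (g : T -> S) (f : S -> S') :
  injective f -> ent P (fun t => f (g t)) = ent P g.
Proof.
move=> finj. rewrite !entE. f_equal.
have E1 : forall s', push P (fun t => f (g t)) s' =
    rsum (fun s => if f s == s' then push P g s else 0).
  move=> s'. rewrite /push.
  transitivity (rsum (fun s => rsum (fun t => if f s == s' then
                   (if g t == s then P t else 0) else 0))).
    rewrite rsum_exch. apply: rsum_ext => t.
    have := rsum_if_eq' (g t) (fun s => if f s == s' then P t else 0).
    move=> /= <-. apply: rsum_ext => s. by case: (f s == s'); case: (g t == s).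
  apply: rsum_ext => s. case: eqP => // _. by rewrite rsum0.
have E2 : forall s', nlogn (push P (fun t => f (g t)) s') =
    rsum (fun s => if f s == s' then nlogn (push P g s) else 0).
  move=> s'. rewrite E1.
  case: (boolP [exists s, f s == s']) => [/existsP [s0 /eqP Hs0]| /existsP Hn].
  - have Hc : forall s, (f s == s') = (s == s0).
      move=> s. rewrite -Hs0. apply/eqP/eqP => [/finj|->] //.
    under rsum_ext => s do rewrite Hc.
    rewrite rsum_if_eq.
    under [RHS]rsum_ext => s do rewrite Hc.
    by rewrite rsum_if_eq.
  - have Hc : forall s, (f s == s') = false.
      move=> s. apply/negP => H. apply: Hn. by exists s.
    under rsum_ext => s do rewrite Hc.
    under [RHS]rsum_ext => s do rewrite Hc.
    by rewrite !rsum0 nlogn0.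
under rsum_ext => s' do rewrite E2.
rewrite rsum_exch. apply: rsum_ext => s. by rewrite rsum_if_eq'.
Qed.

Definition restr (T U : finType) (P : T -> R) (u : T -> U) (u0 : U) (t : T) : R :=
  if u t == u0 then P t else 0.

Lemma ent_cond (T S U : finType) (P : T -> R) (g : T -> S) (u : T -> U) :
  ent P (fun t => (g t, u t)) = rsum (fun u0 => ent (restr P u u0) g).
Proof.
rewrite entE rsum_pair rsum_exch.
under [RHS]rsum_ext => u0 do rewrite entE. rewrite rsum_opp. f_equal.
apply: rsum_ext => u0. apply: rsum_ext => s. f_equal.
rewrite /push /restr. apply: rsum_ext => t. rewrite xpair_eqE.
by case: (g t == s); case: (u t == u0).
Qed.

Lemma cmi_cond (T A B C U : finType) (P : T -> R) (a : T -> A) (b : T -> B)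
    (c : T -> C) (u : T -> U) :
  cmi P a b (fun t => (c t, u t)) = rsum (fun u0 => cmi (restr P u u0) a b c).
Proof.
have finj : forall (X : finType), injective (fun p : (X * C) * U => (p.1.1, (p.1.2, p.2))).
  move=> X [[x1 y1] z1] [[x2 y2] z2] /= [-> -> ->]. done.
rewrite /cmi.
have := ent_inj P (fun t => ((a t, c t), u t)) (finj A); move=> /= ->.
have := ent_inj P (fun t => ((b t, c t), u t)) (finj B); move=> /= ->.
have := ent_inj P (fun t => ((a t, b t, c t), u t)) (finj (A * B)%type); move=> /= ->.
rewrite !ent_cond. rewrite -rsum_add -!rsum_sub. done.
Qed.

Lemma cmi_cond0 (T A B U : finType) (P : T -> R) (a : T -> A) (b : T -> B)
    (u : T -> U) :
  cmi P a b u = rsum (fun u0 => cmi (restr P u u0) a b (fun _ => tt)).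
Proof.
have finj : forall (X : finType), injective (fun p : X * U => ((p.1, tt), p.2)).
  move=> X [x1 z1] [x2 z2] /= [-> ->]. done.
have finj2 : injective (fun p : unit * U => p.2).
  move=> [[] z1] [[] z2] /= ->. done.
rewrite /cmi.
have := ent_inj P (fun t => (a t, u t)) (finj A); move=> /= <-.
have := ent_inj P (fun t => (b t, u t)) (finj B); move=> /= <-.
have := ent_inj P (fun t => (a t, b t, u t)) (finj (A * B)%type); move=> /= <-.
have := ent_inj P (fun t => (tt, u t)) finj2; move=> /= ->.
rewrite !(ent_cond P _ u). rewrite -rsum_add -!rsum_sub.
apply: rsum_ext => u0.
have finj3 : forall (X : finType), injective (fun x : X => (x, tt)).
  move=> X x y [] //.
have := ent_inj (restr P u u0) a (finj3 A); move=> /= ->.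
have := ent_inj (restr P u u0) b (finj3 B); move=> /= ->.
have := ent_inj (restr P u u0) (fun t => (a t, b t)) (finj3 (A * B)%type); move=> /= ->.
done.
Qed.

Lemma ent_scale (T S : finType) (P : T -> R) (g : T -> S) c :
  (forall t, 0 <= P t) -> 0 <= c ->
  ent (fun t => c * P t) g = c * ent P g - nlogn c * rsum P.
Proof.
move=> HP Hc. rewrite !entE.
have E : forall s, push (fun t => c * P t) g s = c * push P g s.
  move=> s. rewrite /push -rsum_scal. apply: rsum_ext => t. case: eqP => _; ring.
under rsum_ext => s do rewrite E (nlogn_scale Hc (push_ge0 g s HP)).
rewrite rsum_add rsum_scal rsum_scalr push_sum. ring.
Qed.

Lemma cmi_scale (T A B C : finType) (P : T -> R) (a : T -> A) (b : T -> B)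
    (c : T -> C) k :
  (forall t, 0 <= P t) -> 0 <= k ->
  cmi (fun t => k * P t) a b c = k * cmi P a b c.
Proof. move=> HP Hk. rewrite /cmi !ent_scale //. ring. Qed.

Lemma cmi_zero (T A B C : finType) (P : T -> R) (a : T -> A) (b : T -> B)
    (c : T -> C) : (forall t, P t = 0) -> cmi P a b c = 0.
Proof.
move=> H. have E : forall (S : finType) (g : T -> S), ent P g = 0.
  move=> S g. rewrite entE. rewrite rsum0'; first ring.
  move=> s. rewrite /push rsum0' ?nlogn0 // => t. case: eqP => _ //.
rewrite /cmi !E. ring.
Qed.

Definition P1 (X1 X2 Y : finType) (W : X1 -> X2 -> Y -> R) (m : X1 -> X2 -> R)
  (t : (X1 * X2 * Y)%type) : R := m t.1.1 t.1.2 * W t.1.1 t.1.2 t.2.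

Definition qA (X1 X2 Y : finType) (W : X1 -> X2 -> Y -> R) (m : X1 -> X2 -> R) : R :=
  cmi (P1 W m) (fun t => t.1.1) (fun t => t.1.2) (fun _ => tt).
Definition qB (X1 X2 Y : finType) (W : X1 -> X2 -> Y -> R) (m : X1 -> X2 -> R) : R :=
  cmi (P1 W m) (fun t => t.1.1) (fun t => t.2) (fun t => t.1.2).
Definition qD (X1 X2 Y : finType) (W : X1 -> X2 -> Y -> R) (m : X1 -> X2 -> R) : R :=
  cmi (P1 W m) (fun t => t.1.2) (fun t => t.2) (fun t => t.1.1).
Definition qE (X1 X2 Y : finType) (W : X1 -> X2 -> Y -> R) (m : X1 -> X2 -> R) : R :=
  cmi (P1 W m) (fun t => t.1) (fun t => t.2) (fun _ => tt).

Definition msum (U X1 X2 : finType) (m : U -> X1 -> X2 -> R) : X1 -> X2 -> R :=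
  fun x1 x2 => rsum (fun u => m u x1 x2).

Definition Fobj (U X1 X2 Y : finType) (W : X1 -> X2 -> Y -> R) (C1 C2 : R)
  (m : U -> X1 -> X2 -> R) : R :=
  Rmin (C1 + C2 - rsum (fun u => qA W (m u)))
  (Rmin (C2 + rsum (fun u => qB W (m u)))
  (Rmin (C1 + rsum (fun u => qD W (m u)))
  (Rmin ((C1 + C2 + rsum (fun u => qE W (m u)) - rsum (fun u => qA W (m u))) / 2)
        (qE W (msum m))))).

Definition proj4 (U X1 X2 Y : finType) (t : (U * X1 * X2 * Y)%type) : (X1 * X2 * Y)%type :=
  (t.1.1.2, t.1.2, t.2).

Lemma sum3 (X1 X2 Y : finType) (F : (X1 * X2 * Y)%type -> R) :
  rsum F = rsum (fun x1 => rsum (fun x2 => rsum (fun y => F (x1, x2, y)))).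
Proof. rewrite rsum_pair rsum_pair. done. Qed.

Lemma sum4 (U X1 X2 Y : finType) (F : (U * X1 * X2 * Y)%type -> R) :
  rsum F = rsum (fun u => rsum (fun x1 => rsum (fun x2 => rsum (fun y => F (u, x1, x2, y))))).
Proof. rewrite rsum_pair rsum_pair rsum_pair. done. Qed.

Lemma sumU (U X1 X2 Y : finType) (F : (U * X1 * X2 * Y)%type -> R) u0 :
  rsum (fun t => if t.1.1.1 == u0 then F t else 0) =
  rsum (fun t' : (X1 * X2 * Y)%type => F (u0, t'.1.1, t'.1.2, t'.2)).
Proof.
rewrite sum4 sum3 /=.
transitivity (rsum (fun u => if u == u0 then
   rsum (fun x1 => rsum (fun x2 => rsum (fun y => F (u, x1, x2, y)))) else 0)).
  apply: rsum_ext => u. case: eqP => _ //. rewrite rsum0' // => x1.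
  rewrite rsum0' // => x2. rewrite rsum0' //.
by rewrite rsum_if_eq.
Qed.

Lemma sumU_all (U X1 X2 Y : finType) (F : (U * X1 * X2 * Y)%type -> R) :
  rsum F = rsum (fun u0 => rsum (fun t' : (X1 * X2 * Y)%type => F (u0, t'.1.1, t'.1.2, t'.2))).
Proof.
transitivity (rsum (fun t => rsum (fun u0 => if t.1.1.1 == u0 then F t else 0))).
  apply: rsum_ext => t. by rewrite rsum_if_eq'.
rewrite rsum_exch. apply: rsum_ext => u0. by rewrite sumU.
Qed.

Lemma push_restr (U X1 X2 Y S : finType) (W : X1 -> X2 -> Y -> R)
    (p : U -> X1 -> X2 -> R) (g : (X1 * X2 * Y)%type -> S) u0 s :
  push (restr (joint p W) (fun t => t.1.1.1) u0) (fun t => g (proj4 t)) s =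
  push (P1 W (p u0)) g s.
Proof.
rewrite /push /restr.
transitivity (rsum (fun t : (U * X1 * X2 * Y)%type => if t.1.1.1 == u0 then
   (if g (proj4 t) == s then joint p W t else 0) else 0)).
  apply: rsum_ext => t. by case: (g (proj4 t) == s); case: (t.1.1.1 == u0).
rewrite sumU. apply: rsum_ext => -[[x1 x2] y] /=. done.
Qed.

Lemma push_joint (U X1 X2 Y S : finType) (W : X1 -> X2 -> Y -> R)
    (p : U -> X1 -> X2 -> R) (g : (X1 * X2 * Y)%type -> S) s :
  push (joint p W) (fun t => g (proj4 t)) s = push (P1 W (msum p)) g s.
Proof.
rewrite /push sumU_all rsum_exch. apply: rsum_ext => -[[x1 x2] y] /=.
rewrite /P1 /msum /joint /=. case: (g (x1, x2, y) == s).
- by rewrite rsum_scalr.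
- by rewrite rsum0.
Qed.

Lemma cmi_restr (U X1 X2 Y A B C : finType) (W : X1 -> X2 -> Y -> R)
    (p : U -> X1 -> X2 -> R) u0 (a : _ -> A) (b : _ -> B) (c : _ -> C) :
  cmi (restr (joint p W) (fun t => t.1.1.1) u0)
      (fun t => a (proj4 t)) (fun t => b (proj4 t)) (fun t => c (proj4 t)) =
  cmi (P1 W (p u0)) a b c.
Proof.
have E : forall (S : finType) (g : (X1 * X2 * Y)%type -> S),
  ent (restr (joint p W) (fun t => t.1.1.1) u0) (fun t => g (proj4 t)) = ent (P1 W (p u0)) g.
  move=> S g. apply: ent_push => s. exact: push_restr.
rewrite /cmi.
rewrite (E _ (fun t => (a t, c t))) (E _ (fun t => (b t, c t))).
rewrite (E _ (fun t => (a t, b t, c t))) (E _ c). done.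
Qed.

Lemma cmi_joint (U X1 X2 Y A B C : finType) (W : X1 -> X2 -> Y -> R)
    (p : U -> X1 -> X2 -> R) (a : _ -> A) (b : _ -> B) (c : _ -> C) :
  cmi (joint p W)
      (fun t => a (proj4 t)) (fun t => b (proj4 t)) (fun t => c (proj4 t)) =
  cmi (P1 W (msum p)) a b c.
Proof.
have E : forall (S : finType) (g : (X1 * X2 * Y)%type -> S),
  ent (joint p W) (fun t => g (proj4 t)) = ent (P1 W (msum p)) g.
  move=> S g. apply: ent_push => s. exact: push_joint.
rewrite /cmi.
rewrite (E _ (fun t => (a t, c t))) (E _ (fun t => (b t, c t))).
rewrite (E _ (fun t => (a t, b t, c t))) (E _ c). done.
Qed.

Lemma objective_eq (U X1 X2 Y : finType) (W : X1 -> X2 -> Y -> R)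
    (p : U -> X1 -> X2 -> R) C1 C2 :
  fl_objective W p C1 C2 = Fobj W C1 C2 p.
Proof.
have eA : cmi (joint p W) (fun t => t.1.1.2) (fun t => t.1.2) (fun t => t.1.1.1)
          = rsum (fun u => qA W (p u)).
  rewrite cmi_cond0. apply: rsum_ext => u0.
  exact: (cmi_restr W p u0 (fun t => t.1.1) (fun t => t.1.2) (fun _ => tt)).
have eB : cmi (joint p W) (fun t => t.1.1.2) (fun t => t.2) (fun t => (t.1.2, t.1.1.1))
          = rsum (fun u => qB W (p u)).
  etransitivity; first exact: (cmi_cond (joint p W) (fun t => t.1.1.2) (fun t => t.2)
                                  (fun t => t.1.2) (fun t => t.1.1.1)).
  apply: rsum_ext => u0.
  exact: (cmi_restr W p u0 (fun t => t.1.1) (fun t => t.2) (fun t => t.1.2)).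
have eD : cmi (joint p W) (fun t => t.1.2) (fun t => t.2) (fun t => (t.1.1.2, t.1.1.1))
          = rsum (fun u => qD W (p u)).
  etransitivity; first exact: (cmi_cond (joint p W) (fun t => t.1.2) (fun t => t.2)
                                  (fun t => t.1.1.2) (fun t => t.1.1.1)).
  apply: rsum_ext => u0.
  exact: (cmi_restr W p u0 (fun t => t.1.2) (fun t => t.2) (fun t => t.1.1)).
have eE : cmi (joint p W) (fun t => (t.1.1.2, t.1.2)) (fun t => t.2) (fun t => t.1.1.1)
          = rsum (fun u => qE W (p u)).
  rewrite cmi_cond0. apply: rsum_ext => u0.
  exact: (cmi_restr W p u0 (fun t => t.1) (fun t => t.2) (fun _ => tt)).
have eG : cmi (joint p W) (fun t => (t.1.1.2, t.1.2)) (fun t => t.2) (fun _ => tt)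
          = qE W (msum p).
  exact: (cmi_joint W p (fun t => t.1) (fun t => t.2) (fun _ => tt)).
rewrite /fl_objective /Fobj /=.
rewrite eA eB eD eE eG. done.
Qed.

Definition sc (X1 X2 : finType) (k : R) (m : X1 -> X2 -> R) : X1 -> X2 -> R :=
  fun x1 x2 => k * m x1 x2.
Definition nneg (X1 X2 : finType) (m : X1 -> X2 -> R) : Prop :=
  forall x1 x2, 0 <= m x1 x2.
Definition mass (X1 X2 : finType) (m : X1 -> X2 -> R) : R :=
  rsum (fun x : (X1 * X2)%type => m x.1 x.2).
Definition my (X1 X2 Y : finType) (W : X1 -> X2 -> Y -> R) (M : X1 -> X2 -> R) (y : Y) : R :=
  rsum (fun x : (X1 * X2)%type => M x.1 x.2 * W x.1 x.2 y).
Definition kap (X1 X2 Y : finType) (W : X1 -> X2 -> Y -> R) (x : (X1 * X2)%type) : R :=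
  rsum (fun y => nlogn (W x.1 x.2 y)).
Definition Kf (X1 X2 Y : finType) (W : X1 -> X2 -> Y -> R) (M : X1 -> X2 -> R) : R :=
  rsum (fun x : (X1 * X2)%type => M x.1 x.2 * kap W x).

Lemma P1_ge0 (X1 X2 Y : finType) (W : X1 -> X2 -> Y -> R) m :
  is_channel W -> nneg m -> forall t, 0 <= P1 W m t.
Proof. move=> [HW _] Hm t. rewrite /P1. apply: Rmult_le_pos; [exact: Hm | exact: HW]. Qed.

Lemma P1_sc (X1 X2 Y : finType) (W : X1 -> X2 -> Y -> R) k m :
  P1 W (sc k m) = fun t => k * P1 W m t.
Proof. apply: functional_extensionality => t. rewrite /P1 /sc. ring. Qed.

Lemma qA_sc (X1 X2 Y : finType) (W : X1 -> X2 -> Y -> R) k m :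
  is_channel W -> nneg m -> 0 <= k -> qA W (sc k m) = k * qA W m.
Proof. move=> HW Hm Hk. rewrite /qA P1_sc cmi_scale //. exact: P1_ge0. Qed.
Lemma qB_sc (X1 X2 Y : finType) (W : X1 -> X2 -> Y -> R) k m :
  is_channel W -> nneg m -> 0 <= k -> qB W (sc k m) = k * qB W m.
Proof. move=> HW Hm Hk. rewrite /qB P1_sc cmi_scale //. exact: P1_ge0. Qed.
Lemma qD_sc (X1 X2 Y : finType) (W : X1 -> X2 -> Y -> R) k m :
  is_channel W -> nneg m -> 0 <= k -> qD W (sc k m) = k * qD W m.
Proof. move=> HW Hm Hk. rewrite /qD P1_sc cmi_scale //. exact: P1_ge0. Qed.
Lemma qE_sc (X1 X2 Y : finType) (W : X1 -> X2 -> Y -> R) k m :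
  is_channel W -> nneg m -> 0 <= k -> qE W (sc k m) = k * qE W m.
Proof. move=> HW Hm Hk. rewrite /qE P1_sc cmi_scale //. exact: P1_ge0. Qed.

Lemma qA0 (X1 X2 Y : finType) (W : X1 -> X2 -> Y -> R) : qA W (fun _ _ => 0) = 0.
Proof. rewrite /qA; apply: cmi_zero => t; rewrite /P1; ring. Qed.
Lemma qB0 (X1 X2 Y : finType) (W : X1 -> X2 -> Y -> R) : qB W (fun _ _ => 0) = 0.
Proof. rewrite /qB; apply: cmi_zero => t; rewrite /P1; ring. Qed.
Lemma qD0 (X1 X2 Y : finType) (W : X1 -> X2 -> Y -> R) : qD W (fun _ _ => 0) = 0.
Proof. rewrite /qD; apply: cmi_zero => t; rewrite /P1; ring. Qed.
Lemma qE0 (X1 X2 Y : finType) (W : X1 -> X2 -> Y -> R) : qE W (fun _ _ => 0) = 0.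
Proof. rewrite /qE; apply: cmi_zero => t; rewrite /P1; ring. Qed.

Lemma finj_unit (X : finType) : injective (fun x : X => (x, tt)).
Proof. move=> x y [] //. Qed.

Lemma qE_formula (X1 X2 Y : finType) (W : X1 -> X2 -> Y -> R) M :
  is_channel W -> nneg M ->
  qE W M = Kf W M - rsum (fun y => nlogn (my W M y)) + nlogn (rsum (my W M)).
Proof.
move=> HW HM. have [HW0 HW1] := HW.
set P := P1 W M.
have e1 : ent P (fun t => (t.1, tt)) = - rsum (fun x : (X1 * X2)%type => nlogn (M x.1 x.2)).
  have := ent_inj P (fun t => t.1) (@finj_unit (X1 * X2)%type); move=> /= ->.
  rewrite entE. f_equal. apply: rsum_ext => x. f_equal.
  rewrite /push rsum_pair /=.
  transitivity (rsum (fun x' => if x' == x then rsum (fun y => P (x', y)) else 0)).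
    apply: rsum_ext => x'. case: eqP => _ //. by rewrite rsum0.
  rewrite rsum_if_eq /P /P1 /= rsum_scal HW1. ring.
have e2 : ent P (fun t => (t.2, tt)) = - rsum (fun y => nlogn (my W M y)).
  have := ent_inj P (fun t => t.2) (@finj_unit Y); move=> /= ->.
  rewrite entE. f_equal. apply: rsum_ext => y. f_equal.
  rewrite /push rsum_pair /= /my. apply: rsum_ext => x.
  by rewrite rsum_if_eq.
have e3 : ent P (fun t => (t.1, t.2, tt)) =
    - rsum (fun x : (X1 * X2)%type => rsum (fun y => nlogn (M x.1 x.2 * W x.1 x.2 y))).
  have := ent_inj P (fun t => (t.1, t.2)) (@finj_unit (X1 * X2 * Y)%type); move=> /= ->.
  rewrite entE. f_equal. rewrite rsum_pair. apply: rsum_ext => x. apply: rsum_ext => y.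
  f_equal. rewrite /push.
  transitivity (P (x, y)); last done. rewrite -(rsum_if_eq (x, y) P). apply: rsum_ext => -[x0 y0] //.
have e4 : ent P (fun _ => tt) = - nlogn (rsum (my W M)).
  rewrite entE rsum_unit. f_equal. f_equal. rewrite /push /my /=.
  rewrite rsum_pair rsum_exch. apply: rsum_ext => y. done.
rewrite /qE /cmi. rewrite -/P e1 e2 e3 e4.
have e5 : forall x : (X1 * X2)%type,
   rsum (fun y => nlogn (M x.1 x.2 * W x.1 x.2 y)) = M x.1 x.2 * kap W x + nlogn (M x.1 x.2).
  move=> x. rewrite /kap.
  under rsum_ext => y do rewrite (nlogn_scale (HM _ _) (HW0 _ _ _)).
  rewrite rsum_add rsum_scal rsum_scalr HW1. ring.
rewrite (rsum_ext e5) rsum_add /Kf. set s1 := rsum (fun x : (X1 * X2)%type => nlogn (M x.1 x.2)). set s2 := rsum (fun x : (X1 * X2)%type => M x.1 x.2 * kap W x). ring.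
Qed.

Lemma sc_nonneg (X1 X2 : finType) k (m : X1 -> X2 -> R) :
  0 <= k -> nneg m -> nneg (sc k m).
Proof. move=> Hk Hm x1 x2. apply: Rmult_le_pos => //. Qed.

Lemma msum_nonneg (U X1 X2 : finType) (m : U -> X1 -> X2 -> R) :
  (forall u, nneg (m u)) -> nneg (msum m).
Proof. move=> H x1 x2. apply: rsum_ge0 => u. exact: H. Qed.

Lemma my_lin (U X1 X2 Y : finType) (W : X1 -> X2 -> Y -> R) (m : U -> X1 -> X2 -> R) y :
  my W (msum m) y = rsum (fun u => my W (m u) y).
Proof.
rewrite /my /msum rsum_exch. apply: rsum_ext => x. by rewrite rsum_scalr.
Qed.

Lemma Kf_lin (U X1 X2 Y : finType) (W : X1 -> X2 -> Y -> R) (m : U -> X1 -> X2 -> R) :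
  Kf W (msum m) = rsum (fun u => Kf W (m u)).
Proof.
rewrite /Kf /msum rsum_exch. apply: rsum_ext => x. by rewrite rsum_scalr.
Qed.

Lemma mass_my (X1 X2 Y : finType) (W : X1 -> X2 -> Y -> R) M :
  is_channel W -> rsum (my W M) = mass M.
Proof.
move=> [_ HW1]. rewrite /my /mass rsum_exch. apply: rsum_ext => x.
by rewrite rsum_scal HW1 Rmult_1_r.
Qed.

Lemma nlogn1 : nlogn 1 = 0.
Proof. rewrite nlognE ?ln_1; lra. Qed.

Lemma my_mix (X1 X2 Y : finType) (W : X1 -> X2 -> Y -> R) l M1 M2 y :
  my W (fun x1 x2 => l * M1 x1 x2 + (1 - l) * M2 x1 x2) y =
  l * my W M1 y + (1 - l) * my W M2 y.
Proof.
rewrite /my -!rsum_scal -rsum_add. apply: rsum_ext => x. ring.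
Qed.

Lemma qE_concave (X1 X2 Y : finType) (W : X1 -> X2 -> Y -> R) l M1 M2 :
  is_channel W -> 0 <= l <= 1 -> nneg M1 -> nneg M2 ->
  mass M1 = 1 -> mass M2 = 1 ->
  l * qE W M1 + (1 - l) * qE W M2 <=
  qE W (fun x1 x2 => l * M1 x1 x2 + (1 - l) * M2 x1 x2).
Proof.
move=> HW Hl H1 H2 m1 m2.
have Hl' : 0 <= 1 - l by lra.
have HM : nneg (fun x1 x2 => l * M1 x1 x2 + (1 - l) * M2 x1 x2).
  move=> x1 x2. have := Rmult_le_pos _ _ (proj1 Hl) (H1 x1 x2).
  have := Rmult_le_pos _ _ Hl' (H2 x1 x2). lra.
rewrite !qE_formula // !mass_my //.
have -> : mass (fun x1 x2 => l * M1 x1 x2 + (1 - l) * M2 x1 x2) = 1.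
  rewrite /mass. rewrite (rsum_ext (G := fun x => l * M1 x.1 x.2 + (1 - l) * M2 x.1 x.2)) //.
  rewrite rsum_add !rsum_scal -/(mass M1) -/(mass M2) m1 m2. ring.
rewrite m1 m2 nlogn1.
have eK : Kf W (fun x1 x2 => l * M1 x1 x2 + (1 - l) * M2 x1 x2) = l * Kf W M1 + (1 - l) * Kf W M2.
  rewrite /Kf -!rsum_scal -rsum_add. apply: rsum_ext => x. ring.
rewrite eK.
under [X in _ <= _ - X + _]rsum_ext => y do rewrite my_mix.
have : rsum (fun y => nlogn (l * my W M1 y + (1 - l) * my W M2 y)) <=
       l * rsum (fun y => nlogn (my W M1 y)) + (1 - l) * rsum (fun y => nlogn (my W M2 y)).
  rewrite -!rsum_scal -rsum_add. apply: rsum_le => y. apply: nlogn_convex => //.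
  - apply: rsum_ge0 => x. apply: Rmult_le_pos; [exact: H1 | exact: (proj1 HW)].
  - apply: rsum_ge0 => x. apply: Rmult_le_pos; [exact: H2 | exact: (proj1 HW)].
lra.
Qed.

Lemma qE_bound (X1 X2 Y : finType) (W : X1 -> X2 -> Y -> R) M :
  is_channel W -> nneg M -> mass M = 1 ->
  qE W M <= rsum (fun _ : Y => / ln 2).
Proof.
move=> HW HM Hm. have [HW0 HW1] := HW.
rewrite qE_formula // mass_my // Hm nlogn1.
have : Kf W M <= 0.
  rewrite /Kf -(rsum0 (X1 * X2)%type). apply: rsum_le => x.
  have : kap W x <= 0.
    rewrite /kap -(rsum0 Y). apply: rsum_le => y. apply: nlogn_le0. split => //.
    rewrite -(HW1 x.1 x.2). apply: rsum_term => y'. exact: HW0.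
  move=> Hk. have := HM x.1 x.2. move=> H0.
  have := Rmult_le_compat_l _ _ _ H0 Hk. lra.
have : - rsum (fun y => nlogn (my W M y)) <= rsum (fun _ : Y => / ln 2).
  rewrite -rsum_opp. apply: rsum_le => y. apply: nlogn_lower.
  apply: rsum_ge0 => x. apply: Rmult_le_pos; [exact: HM | exact: HW0].
lra.
Qed.

Lemma Fobj_le_qE (U X1 X2 Y : finType) (W : X1 -> X2 -> Y -> R) C1 C2 (m : U -> X1 -> X2 -> R) :
  Fobj W C1 C2 m <= qE W (msum m).
Proof.
rewrite /Fobj. do 4 (eapply Rle_trans; first apply Rmin_r). lra.
Qed.

Lemma kernel_exists (E : finType) n (c : 'I_n -> E -> R) :
  (#|E| < n)%N ->
  exists d : 'I_n -> R, (exists i, d i <> 0) /\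
     forall e, rsum (fun i => d i * c i e) = 0.
Proof.
move=> Hn.
pose A : 'M[R]_(n, #|E|) := (\matrix_(i, j) c i (enum_val j))%R.
have Hk : kermx A != 0%R.
  rewrite -mxrank_eq0 mxrank_ker. have := rank_leq_col A.
  move=> H. apply/eqP. move=> H0. 
  have : (n <= \rank A)%N by rewrite -subn_eq0; apply/eqP.
  move=> H1. have := leq_trans H1 H. rewrite leqNgt Hn. done.
have [i Hi] : exists i, row i (kermx A) != 0%R.
  apply/existsP. apply: contraT. rewrite negb_exists => /forallP H.
  move: Hk. apply: contraNT => _. apply/eqP/row_matrixP => i.
  rewrite row0. exact/eqP/negPn/H.
pose v := row i (kermx A).
have Hv : (v *m A)%R = 0%R by rewrite /v -row_mul mulmx_ker row0.
exists (fun j => v 0%R j). split.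
- have Erow : forall j, v 0%R j = kermx A i j by move=> j; rewrite /v mxE.
  apply: NNPP => H. move/negP: Hi; apply. apply/eqP/rowP => j. rewrite [RHS]mxE.
  case: (Req_dec (v 0%R j) 0) => Hj; first exact: Hj. exfalso; apply: H; exists j; exact: Hj.
- move=> e. have := congr1 (fun M : 'M_(1, #|E|) => M 0%R (enum_rank e)) Hv.
  rewrite /= !mxE. move=> H. etransitivity; last exact: H.
  rewrite /rsum. apply: eq_bigr => j _. rewrite [X in _ = (_ * X)%R]mxE enum_rankK. done.
Qed.

Definition fam_ok (U X1 X2 : finType) (m : U -> X1 -> X2 -> R) : Prop :=
  (forall u, nneg (m u)) /\ rsum (fun u => mass (m u)) = 1.

Lemma mass_sc (X1 X2 : finType) k (m : X1 -> X2 -> R) : mass (sc k m) = k * mass m.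
Proof. by rewrite /mass /sc rsum_scal. Qed.

Lemma mass_msum (U X1 X2 : finType) (m : U -> X1 -> X2 -> R) :
  mass (msum m) = rsum (fun u => mass (m u)).
Proof. by rewrite /mass /msum rsum_exch. Qed.

Lemma mass_ge0 (X1 X2 : finType) (m : X1 -> X2 -> R) : nneg m -> 0 <= mass m.
Proof. move=> H. apply: rsum_ge0 => x. exact: H. Qed.

Lemma min5 a1 a2 a3 a4 a5 b1 b2 b3 b4 b5 c1 c2 c3 c4 c5 l :
  0 <= l <= 1 ->
  l * b1 + (1 - l) * c1 <= a1 -> l * b2 + (1 - l) * c2 <= a2 ->
  l * b3 + (1 - l) * c3 <= a3 -> l * b4 + (1 - l) * c4 <= a4 ->
  l * b5 + (1 - l) * c5 <= a5 ->
  l * Rmin b1 (Rmin b2 (Rmin b3 (Rmin b4 b5))) + (1 - l) * Rmin c1 (Rmin c2 (Rmin c3 (Rmin c4 c5)))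
  <= Rmin a1 (Rmin a2 (Rmin a3 (Rmin a4 a5))).
Proof.
move=> Hl H1 H2 H3 H4 H5.
set b := Rmin b1 _. set c := Rmin c1 _.
have Hb1 : b <= b1 by apply Rmin_l.
have Hb2 : b <= b2 by rewrite /b; eapply Rle_trans; [apply Rmin_r|apply Rmin_l].
have Hb3 : b <= b3 by rewrite /b; do 2 (eapply Rle_trans; [apply Rmin_r|]); apply Rmin_l.
have Hb4 : b <= b4 by rewrite /b; do 3 (eapply Rle_trans; [apply Rmin_r|]); apply Rmin_l.
have Hb5 : b <= b5 by rewrite /b; do 4 (eapply Rle_trans; [apply Rmin_r|]); apply Rle_refl.
have Hc1 : c <= c1 by apply Rmin_l.
have Hc2 : c <= c2 by rewrite /c; eapply Rle_trans; [apply Rmin_r|apply Rmin_l].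
have Hc3 : c <= c3 by rewrite /c; do 2 (eapply Rle_trans; [apply Rmin_r|]); apply Rmin_l.
have Hc4 : c <= c4 by rewrite /c; do 3 (eapply Rle_trans; [apply Rmin_r|]); apply Rmin_l.
have Hc5 : c <= c5 by rewrite /c; do 4 (eapply Rle_trans; [apply Rmin_r|]); apply Rle_refl.
have K : forall x y, b <= x -> c <= y -> l * b + (1 - l) * c <= l * x + (1 - l) * y.
  move=> x y Hx Hy. have : 0 <= 1 - l by lra. move=> Hl'.
  have := Rmult_le_compat_l _ _ _ (proj1 Hl) Hx. have := Rmult_le_compat_l _ _ _ Hl' Hy. lra.
repeat apply Rmin_glb.
- eapply Rle_trans; [apply (K _ _ Hb1 Hc1)| exact H1].
- eapply Rle_trans; [apply (K _ _ Hb2 Hc2)| exact H2].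
- eapply Rle_trans; [apply (K _ _ Hb3 Hc3)| exact H3].
- eapply Rle_trans; [apply (K _ _ Hb4 Hc4)| exact H4].
- eapply Rle_trans; [apply (K _ _ Hb5 Hc5)| exact H5].
Qed.

Lemma mono5 a1 a2 a3 a4 a5 b1 b2 b3 b4 b5 :
  b1 <= a1 -> b2 <= a2 -> b3 <= a3 -> b4 <= a4 -> b5 <= a5 ->
  Rmin b1 (Rmin b2 (Rmin b3 (Rmin b4 b5))) <= Rmin a1 (Rmin a2 (Rmin a3 (Rmin a4 a5))).
Proof.
move=> H1 H2 H3 H4 H5.
set b := Rmin b1 _.
have Hb1 : b <= b1 by apply Rmin_l.
have Hb2 : b <= b2 by rewrite /b; eapply Rle_trans; [apply Rmin_r|apply Rmin_l].
have Hb3 : b <= b3 by rewrite /b; do 2 (eapply Rle_trans; [apply Rmin_r|]); apply Rmin_l.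
have Hb4 : b <= b4 by rewrite /b; do 3 (eapply Rle_trans; [apply Rmin_r|]); apply Rmin_l.
have Hb5 : b <= b5 by rewrite /b; do 4 (eapply Rle_trans; [apply Rmin_r|]); apply Rle_refl.
repeat apply Rmin_glb; lra.
Qed.

Definition mix (X1 X2 : finType) k1 k2 l (p : 'I_k1 -> X1 -> X2 -> R) (q : 'I_k2 -> X1 -> X2 -> R)
  (i : 'I_(k1 + k2)) : X1 -> X2 -> R :=
  match split i with inl j => sc l (p j) | inr j => sc (1 - l) (q j) end.

Lemma rsum_mix (X1 X2 : finType) k1 k2 l (p : 'I_k1 -> X1 -> X2 -> R) (q : 'I_k2 -> X1 -> X2 -> R)
  (F : (X1 -> X2 -> R) -> R) :
  rsum (fun i => F (mix l p q i)) = rsum (fun j => F (sc l (p j))) + rsum (fun j => F (sc (1 - l) (q j))).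
Proof.
rewrite rsum_ord_split. f_equal; apply: rsum_ext => j; rewrite /mix.
- by rewrite (unsplitK (inl j)).
- by rewrite (unsplitK (inr j)).
Qed.

Lemma mix_ok (X1 X2 : finType) k1 k2 l (p : 'I_k1 -> X1 -> X2 -> R) (q : 'I_k2 -> X1 -> X2 -> R) :
  0 <= l <= 1 -> fam_ok p -> fam_ok q -> fam_ok (mix l p q).
Proof.
move=> Hl [Hp0 Hp1] [Hq0 Hq1]. split.
- move=> i. rewrite /mix. case: split => j; apply: sc_nonneg => //; lra.
- rewrite (rsum_mix l p q (fun m => mass m)).
  under rsum_ext => j do rewrite mass_sc. under [X in _ + X]rsum_ext => j do rewrite mass_sc.
  rewrite !rsum_scal Hp1 Hq1. ring.
Qed.

Lemma mix_obj (X1 X2 Y : finType) (W : X1 -> X2 -> Y -> R) C1 C2 D1 D2 k1 k2 l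
  (p : 'I_k1 -> X1 -> X2 -> R) (q : 'I_k2 -> X1 -> X2 -> R) :
  is_channel W -> 0 <= l <= 1 -> fam_ok p -> fam_ok q ->
  l * Fobj W C1 C2 p + (1 - l) * Fobj W D1 D2 q <=
  Fobj W (l * C1 + (1 - l) * D1) (l * C2 + (1 - l) * D2) (mix l p q).
Proof.
move=> HW Hl [Hp0 Hp1] [Hq0 Hq1].
have Hl1 : 0 <= l by lra. have Hl2 : 0 <= 1 - l by lra.
have SA : rsum (fun i => qA W (mix l p q i)) =
          l * rsum (fun u => qA W (p u)) + (1 - l) * rsum (fun u => qA W (q u)).
  rewrite (rsum_mix l p q (qA W)) -!rsum_scal. f_equal; apply: rsum_ext => j; exact: qA_sc.
have SB : rsum (fun i => qB W (mix l p q i)) =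
          l * rsum (fun u => qB W (p u)) + (1 - l) * rsum (fun u => qB W (q u)).
  rewrite (rsum_mix l p q (qB W)) -!rsum_scal. f_equal; apply: rsum_ext => j; exact: qB_sc.
have SD : rsum (fun i => qD W (mix l p q i)) =
          l * rsum (fun u => qD W (p u)) + (1 - l) * rsum (fun u => qD W (q u)).
  rewrite (rsum_mix l p q (qD W)) -!rsum_scal. f_equal; apply: rsum_ext => j; exact: qD_sc.
have SE : rsum (fun i => qE W (mix l p q i)) =
          l * rsum (fun u => qE W (p u)) + (1 - l) * rsum (fun u => qE W (q u)).
  rewrite (rsum_mix l p q (qE W)) -!rsum_scal. f_equal; apply: rsum_ext => j; exact: qE_sc.
have SM : msum (mix l p q) = fun x1 x2 => l * msum p x1 x2 + (1 - l) * msum q x1 x2.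
  apply: functional_extensionality => x1; apply: functional_extensionality => x2.
  rewrite /msum (rsum_mix l p q (fun m => m x1 x2)) /sc !rsum_scal. done.
rewrite /Fobj SA SB SD SE SM.
apply: min5 => //.
- apply: Req_le. ring.
- apply: Req_le. ring.
- apply: Req_le. ring.
- apply: Req_le. field.
- apply: qE_concave => //; try exact: msum_nonneg; by rewrite mass_msum.
Qed.

Lemma exists_min (T : finType) (f : T -> R) (x : T) : exists i0, forall i, f i0 <= f i.
Proof.
suff : forall s : seq T, forall a, exists y, y \in a :: s /\ forall z, z \in a :: s -> f y <= f z.
  move/(_ (enum T) x) => [y [_ Hy]]. exists y => i. apply: Hy.
  by rewrite in_cons mem_enum orbT.
elim => [|b s IH] a.
  exists a; split; first by rewrite mem_seq1. move=> z; rewrite mem_seq1 => /eqP ->; lra.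
have [y [Hy1 Hy2]] := IH b.
case: (Rle_dec (f a) (f y)) => H.
- exists a. split; first by rewrite in_cons eqxx.
  move=> z; rewrite in_cons => /orP [/eqP ->|Hz]; first lra.
  have := Hy2 z Hz; lra.
- exists y. split; first by rewrite in_cons Hy1 orbT.
  move=> z; rewrite in_cons => /orP [/eqP ->|Hz]; first lra.
  exact: Hy2.
Qed.

Lemma lin_split (T : finType) (t : R) (d F : T -> R) :
  rsum (fun i => (1 + t * d i) * F i) = rsum F + t * rsum (fun i => d i * F i).
Proof. rewrite -rsum_scal -rsum_add. apply: rsum_ext => i. ring. Qed.

Definition good_dir (X1 X2 Y : finType) (W : X1 -> X2 -> Y -> R) n
  (m : 'I_n -> X1 -> X2 -> R) (d : 'I_n -> R) : Prop :=
  (exists i, d i <> 0) /\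
  rsum (fun i => d i * qA W (m i)) = 0 /\ rsum (fun i => d i * qB W (m i)) = 0 /\
  rsum (fun i => d i * qD W (m i)) = 0 /\ rsum (fun i => d i * mass (m i)) = 0 /\
  (forall t, (forall i, 0 <= 1 + t * d i) ->
     qE W (msum (fun i => sc (1 + t * d i) (m i))) = qE W (msum m)).

Lemma good_dir_opp (X1 X2 Y : finType) (W : X1 -> X2 -> Y -> R) n
  (m : 'I_n -> X1 -> X2 -> R) (d : 'I_n -> R) :
  good_dir W m d -> good_dir W m (fun i => - d i).
Proof.
have N0 : forall F : 'I_n -> R, rsum (fun i => d i * F i) = 0 -> rsum (fun i => - d i * F i) = 0.
  move=> F H. rewrite (rsum_ext (G := fun i => - (d i * F i))); last by move=> i; ring.
  rewrite rsum_opp H. ring.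
move=> [[j Hj] [HA [HB [HD [HM HE]]]]]. split; first by exists j; lra.
do 4 (split; first by apply: N0).
move=> t Ht.
have -> : (fun i => sc (1 + t * - d i) (m i)) = (fun i => sc (1 + - t * d i) (m i)).
  apply: functional_extensionality => i. f_equal. ring.
apply: HE => i. have := Ht i. lra.
Qed.

Lemma drop_ok (X1 X2 Y : finType) (W : X1 -> X2 -> Y -> R) C1 C2 n
  (m : 'I_n.+1 -> X1 -> X2 -> R) i0 :
  (forall x1 x2, m i0 x1 x2 = 0) -> fam_ok m ->
  fam_ok (fun j => m (lift i0 j)) /\
  Fobj W C1 C2 m = Fobj W C1 C2 (fun j => m (lift i0 j)).
Proof.
move=> Hz0 [Hm0 Hm1].
have Hz : m i0 = fun _ _ => 0.
  apply: functional_extensionality => x1; apply: functional_extensionality => x2. exact: Hz0.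
split.
- split; first by move=> j; exact: Hm0.
  rewrite -Hm1 (rsum_ord_D1 (fun i => mass (m i)) i0) Hz /mass rsum0. ring.
- rewrite /Fobj.
  rewrite (rsum_ord_D1 (fun i => qA W (m i)) i0) (rsum_ord_D1 (fun i => qB W (m i)) i0).
  rewrite (rsum_ord_D1 (fun i => qD W (m i)) i0) (rsum_ord_D1 (fun i => qE W (m i)) i0).
  rewrite Hz qA0 qB0 qD0 qE0 !Rplus_0_l.
  have -> : msum m = msum (fun j => m (lift i0 j)).
    apply: functional_extensionality => x1; apply: functional_extensionality => x2.
    rewrite /msum (rsum_ord_D1 (fun i => m i x1 x2) i0) Hz. ring.
  done.
Qed.

Lemma step_dir (X1 X2 Y : finType) (W : X1 -> X2 -> Y -> R) C1 C2 n
  (m : 'I_n.+1 -> X1 -> X2 -> R) d :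
  is_channel W -> fam_ok m -> (forall i, 0 < mass (m i)) -> good_dir W m d ->
  0 <= rsum (fun i => d i * qE W (m i)) ->
  exists m' : 'I_n -> X1 -> X2 -> R, fam_ok m' /\ Fobj W C1 C2 m <= Fobj W C1 C2 m'.
Proof.
move=> HW [Hm0 Hm1] Hpos [[j Hj] [HA [HB [HD [HM HE]]]]] HEs.
have [ineg Hineg] : exists i, d i < 0.
  apply: NNPP => H.
  have Hge : forall i, 0 <= d i.
    move=> i. apply: Rnot_lt_le => Hi. apply: H. by exists i.
  have Hdj : 0 < d j by have := Hge j; lra.
  have : d j * mass (m j) <= rsum (fun i => d i * mass (m i)).
    have := @rsum_term _ (fun i => d i * mass (m i)) j. move=> /= H1. apply: H1 => i.
    apply: Rmult_le_pos; [exact: Hge | apply: mass_ge0; exact: Hm0].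
  have := Rmult_lt_0_compat _ _ Hdj (Hpos j). lra.
have [i0 Hi0] := exists_min d ineg.
have Hd0 : d i0 < 0 by have := Hi0 ineg; lra.
set t := - / d i0.
have Ht : forall i, 0 <= 1 + t * d i.
  move=> i. have -> : 1 + t * d i = (d i - d i0) * (- / d i0) by rewrite /t; field; lra.
  apply: Rmult_le_pos; first by have := Hi0 i; lra.
  have := Rinv_lt_0_compat _ Hd0. lra.
have Ht0 : 1 + t * d i0 = 0 by rewrite /t; field; lra.
have Htp : 0 <= t by have := Rinv_lt_0_compat _ Hd0; rewrite /t; lra.
set m1 := fun i => sc (1 + t * d i) (m i).
have Hok1 : fam_ok m1.
  split; first by move=> i; apply: sc_nonneg; [exact: Ht | exact: Hm0].
  rewrite /m1. under rsum_ext => i do rewrite mass_sc. rewrite lin_split Hm1 HM. ring.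
have Hle1 : Fobj W C1 C2 m <= Fobj W C1 C2 m1.
  have SA : rsum (fun i => qA W (m1 i)) = rsum (fun i => qA W (m i)).
    rewrite /m1. under rsum_ext => i do rewrite qA_sc //. rewrite lin_split HA. ring.
  have SB : rsum (fun i => qB W (m1 i)) = rsum (fun i => qB W (m i)).
    rewrite /m1. under rsum_ext => i do rewrite qB_sc //. rewrite lin_split HB. ring.
  have SD : rsum (fun i => qD W (m1 i)) = rsum (fun i => qD W (m i)).
    rewrite /m1. under rsum_ext => i do rewrite qD_sc //. rewrite lin_split HD. ring.
  have SE : rsum (fun i => qE W (m i)) <= rsum (fun i => qE W (m1 i)).
    rewrite /m1. under [X in _ <= X]rsum_ext => i do rewrite qE_sc //. rewrite lin_split.
    have := Rmult_le_pos _ _ Htp HEs. lra.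
  have SG : qE W (msum m1) = qE W (msum m) by exact: HE.
  rewrite /Fobj SA SB SD SG. apply: mono5; lra.
have Hz : forall x1 x2, m1 i0 x1 x2 = 0 by move=> x1 x2; rewrite /m1 /sc Ht0; ring.
have [Hok' Heq] := drop_ok W C1 C2 Hz Hok1.
exists (fun j => m1 (lift i0 j)). split => //. rewrite -Heq. exact: Hle1.
Qed.

Lemma goodX (X1 X2 Y : finType) (W : X1 -> X2 -> Y -> R) n (m : 'I_n -> X1 -> X2 -> R) :
  (#|X1| * #|X2| + 3 < n)%N -> exists d, good_dir W m d.
Proof.
move=> Hn.
pose c := fun i (e : option (option (option (X1 * X2)))) =>
  match e with
  | None => qA W (m i) | Some None => qB W (m i) | Some (Some None) => qD W (m i)
  | Some (Some (Some x)) => m i x.1 x.2 end.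
have Hc : (#|{: option (option (option (X1 * X2)))}| < n)%N.
  by rewrite !card_option card_prod -addn3.
have [d [Hd Heq]] := kernel_exists c Hc.
exists d. split => //.
split; first exact: (Heq None).
split; first exact: (Heq (Some None)).
split; first exact: (Heq (Some (Some None))).
have Hx : forall x1 x2, rsum (fun i => d i * m i x1 x2) = 0.
  move=> x1 x2. exact: (Heq (Some (Some (Some (x1, x2))))).
split.
- rewrite /mass. under rsum_ext => i do rewrite -rsum_scal. rewrite rsum_exch.
  apply: rsum0' => x. exact: Hx.
- move=> t Ht. f_equal.
  apply: functional_extensionality => x1; apply: functional_extensionality => x2.
  rewrite /msum /sc lin_split Hx. ring.
Qed.

Lemma Kf_sc (X1 X2 Y : finType) (W : X1 -> X2 -> Y -> R) k m : Kf W (sc k m) = k * Kf W m.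
Proof. rewrite /Kf /sc -rsum_scal. apply: rsum_ext => x. ring. Qed.
Lemma my_sc (X1 X2 Y : finType) (W : X1 -> X2 -> Y -> R) k m y : my W (sc k m) y = k * my W m y.
Proof. rewrite /my /sc -rsum_scal. apply: rsum_ext => x. ring. Qed.

Lemma goodY (X1 X2 Y : finType) (W : X1 -> X2 -> Y -> R) n (m : 'I_n -> X1 -> X2 -> R) :
  is_channel W -> fam_ok m -> (#|Y| + 4 < n)%N -> exists d, good_dir W m d.
Proof.
move=> HW [Hm0 Hm1] Hn.
pose c := fun i (e : option (option (option (option Y)))) =>
  match e with
  | None => qA W (m i) | Some None => qB W (m i) | Some (Some None) => qD W (m i)
  | Some (Some (Some None)) => Kf W (m i)
  | Some (Some (Some (Some y))) => my W (m i) y end.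
have Hc : (#|{: option (option (option (option Y)))}| < n)%N.
  by rewrite !card_option -addn4.
have [d [Hd Heq]] := kernel_exists c Hc.
exists d. split => //.
split; first exact: (Heq None).
split; first exact: (Heq (Some None)).
split; first exact: (Heq (Some (Some None))).
have HK : rsum (fun i => d i * Kf W (m i)) = 0 by exact: (Heq (Some (Some (Some None)))).
have Hy : forall y, rsum (fun i => d i * my W (m i) y) = 0.
  move=> y. exact: (Heq (Some (Some (Some (Some y))))).
split.
- under rsum_ext => i do rewrite -(mass_my (m i) HW) -rsum_scal. rewrite rsum_exch.
  apply: rsum0' => y. exact: Hy.
- move=> t Ht.
  have Hn1 : nneg (msum (fun i => sc (1 + t * d i) (m i))).
    apply: msum_nonneg => i. apply: sc_nonneg; [exact: Ht | exact: Hm0].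
  have Hn2 : nneg (msum m) by apply: msum_nonneg.
  rewrite !qE_formula //.
  have -> : my W (msum (fun i => sc (1 + t * d i) (m i))) = my W (msum m).
    apply: functional_extensionality => y. rewrite !my_lin.
    under rsum_ext => i do rewrite my_sc. rewrite lin_split Hy. ring.
  have -> : Kf W (msum (fun i => sc (1 + t * d i) (m i))) = Kf W (msum m).
    rewrite !Kf_lin. under rsum_ext => i do rewrite Kf_sc. rewrite lin_split HK. ring.
  done.
Qed.

Lemma step (X1 X2 Y : finType) (W : X1 -> X2 -> Y -> R) C1 C2 n
  (m : 'I_n.+1 -> X1 -> X2 -> R) :
  is_channel W -> (minn (#|X1| * #|X2| + 3) (#|Y| + 4) < n.+1)%N -> fam_ok m ->
  exists m' : 'I_n -> X1 -> X2 -> R, fam_ok m' /\ Fobj W C1 C2 m <= Fobj W C1 C2 m'.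
Proof.
move=> HW Hn Hm.
case: (classic (exists i0, mass (m i0) = 0)) => [[i0 Hi0]|Hnz].
- have Hz : forall x1 x2, m i0 x1 x2 = 0.
    move=> x1 x2. have := @rsum_eq0_term _ (fun x : (X1 * X2)%type => m i0 x.1 x.2) (x1, x2).
    apply => //. move=> x. exact: (proj1 Hm).
  have [Hok Heq] := drop_ok W C1 C2 Hz Hm.
  exists (fun j => m (lift i0 j)). split => //. exact: Req_le Heq.
- have Hpos : forall i, 0 < mass (m i).
    move=> i. have := mass_ge0 (proj1 Hm i). move=> H.
    case: (Rle_lt_or_eq_dec _ _ H) => // H'. exfalso; apply: Hnz; by exists i.
  have [d Hd] : exists d, good_dir W m d.
    move: Hn. rewrite gtn_min => /orP [H|H].
    + exact: goodX.
    + exact: goodY.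
  case: (Rle_dec 0 (rsum (fun i => d i * qE W (m i)))) => Hs.
  + exact: (step_dir C1 C2 HW Hm Hpos Hd Hs).
  + apply: (step_dir C1 C2 HW Hm Hpos (good_dir_opp Hd)).
    rewrite (rsum_ext (G := fun i => - (d i * qE W (m i)))); last by move=> i; ring.
    rewrite rsum_opp. lra.
Qed.

Lemma reduce (X1 X2 Y : finType) (W : X1 -> X2 -> Y -> R) C1 C2 :
  is_channel W -> forall n (m : 'I_n -> X1 -> X2 -> R), fam_ok m ->
  exists k, (k <= minn (#|X1| * #|X2| + 3) (#|Y| + 4))%N /\
  exists m' : 'I_k -> X1 -> X2 -> R, fam_ok m' /\ Fobj W C1 C2 m <= Fobj W C1 C2 m'.
Proof.
move=> HW. elim => [|n IH] m Hm.
- exists 0%N. split => //. exists m. split => //. lra.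
- case: (leqP n.+1 (minn (#|X1| * #|X2| + 3) (#|Y| + 4))) => H.
  + exists n.+1. split => //. exists m. split => //. lra.
  + have [m'' [Hok Hle]] := step C1 C2 HW H Hm.
    have [k [Hk [m' [Hok' Hle']]]] := IH m'' Hok.
    exists k. split => //. exists m'. split => //. lra.
Qed.

Lemma pmf_sum (U X1 X2 : finType) (p : U -> X1 -> X2 -> R) :
  rsum (fun t : (U * X1 * X2)%type => p t.1.1 t.1.2 t.2) = rsum (fun u => mass (p u)).
Proof. rewrite rsum_pair rsum_pair /mass. apply: rsum_ext => u. by rewrite rsum_pair. Qed.

Lemma pmf_iff (U X1 X2 : finType) (p : U -> X1 -> X2 -> R) : is_pmf3 p <-> fam_ok p.
Proof.
rewrite /is_pmf3 /fam_ok pmf_sum. split; move=> [H1 H2]; split => //.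
Qed.

Lemma vals_iff (X1 X2 Y : finType) (W : X1 -> X2 -> Y -> R) C1 C2 v :
  fl_values W C1 C2 v <->
  exists k, (k <= minn (#|X1| * #|X2| + 3) (#|Y| + 4))%N /\
  exists m : 'I_k -> X1 -> X2 -> R, fam_ok m /\ v = Fobj W C1 C2 m.
Proof.
split.
- move=> [k [Hk [p [Hp ->]]]]. exists k. split => //. exists p.
  split; [exact/pmf_iff | exact: objective_eq].
- move=> [k [Hk [p [Hp ->]]]]. exists k. split => //. exists p.
  split; [exact/pmf_iff | by rewrite objective_eq].
Qed.

Lemma f_l_lub (X1 X2 Y : finType) (W : X1 -> X2 -> Y -> R) C1 C2 :
  is_channel W -> (exists v, fl_values W C1 C2 v) ->
  is_lub (fl_values W C1 C2) (f_l W C1 C2).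
Proof.
move=> HW Hne. rewrite /f_l /Rsup. apply: epsilon_spec.
have Hb : bound (fl_values W C1 C2).
  exists (rsum (fun _ : Y => / ln 2)) => v /vals_iff [k [Hk [m [[Hm0 Hm1] ->]]]].
  eapply Rle_trans; first exact: Fobj_le_qE.
  apply: qE_bound => //; first exact: msum_nonneg.
  by rewrite mass_msum.
have [l Hl] := completeness (fl_values W C1 C2) Hb Hne. by exists l.
Qed.

Lemma approx (E : R -> Prop) l eps : is_lub E l -> 0 < eps -> exists v, E v /\ l - eps < v.
Proof.
move=> [Hub Hlub] He. apply: NNPP => H.
have : is_upper_bound E (l - eps).
  move=> v Hv. apply: Rnot_lt_le => Hlt. apply: H. by exists v.
move/Hlub. lra.
Qed.

Unset Implicit Arguments.

Theorem proposition1 (X1 X2 Y : finType) (W : X1 -> X2 -> Y -> R)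
    (HW : is_channel W) (C1 C2 D1 D2 lam : R) :
  0 <= C1 -> 0 <= C2 -> 0 <= D1 -> 0 <= D2 -> 0 <= lam <= 1 ->
  lam * f_l W C1 C2 + (1 - lam) * f_l W D1 D2
    <= f_l W (lam * C1 + (1 - lam) * D1) (lam * C2 + (1 - lam) * D2).
Proof.
move=> _ _ _ _ Hl.
case: (classic (exists k, (k <= minn (#|X1| * #|X2| + 3) (#|Y| + 4))%N /\
                 exists p : 'I_k -> X1 -> X2 -> R, is_pmf3 p)) => [Hne|Hem]; last first.
  have E : forall A B, fl_values W A B = fun _ => False.
    move=> A B. apply: functional_extensionality => v. apply: propositional_extensionality.
    split => // -[k [Hk [p [Hp _]]]]. apply: Hem. exists k. split => //. by exists p.
  rewrite /f_l !E. lra.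
have Hne' : forall A B, exists v, fl_values W A B v.
  move=> A B. have [k [Hk [p Hp]]] := Hne. exists (fl_objective W p A B).
  exists k. split => //. by exists p.
have L1 := f_l_lub HW (Hne' C1 C2).
have L2 := f_l_lub HW (Hne' D1 D2).
have L3 := f_l_lub HW (Hne' (lam * C1 + (1 - lam) * D1) (lam * C2 + (1 - lam) * D2)).
apply: Rle_plus_epsilon => eps He.
have [v1 [Hv1 Hv1']] := approx L1 He.
have [v2 [Hv2 Hv2']] := approx L2 He.
move/vals_iff: Hv1 => [k1 [_ [p [Hp Ev1]]]]. rewrite Ev1 in Hv1'.
move/vals_iff: Hv2 => [k2 [_ [q [Hq Ev2]]]]. rewrite Ev2 in Hv2'.
have Hmix : lam * Fobj W C1 C2 p + (1 - lam) * Fobj W D1 D2 q <=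
  Fobj W (lam * C1 + (1 - lam) * D1) (lam * C2 + (1 - lam) * D2) (mix lam p q)
  by apply: mix_obj.
have [k [Hk [m' [Hm' Hle]]]] := reduce (lam * C1 + (1 - lam) * D1) (lam * C2 + (1 - lam) * D2)
    HW (mix_ok Hl Hp Hq).
have Hin : fl_values W (lam * C1 + (1 - lam) * D1) (lam * C2 + (1 - lam) * D2)
    (Fobj W (lam * C1 + (1 - lam) * D1) (lam * C2 + (1 - lam) * D2) m').
  apply/vals_iff. exists k. split => //. exists m'. by split.
have Hf3 := proj1 L3 _ Hin.
have Hl1 : 0 <= lam by lra. have Hl2 : 0 <= 1 - lam by lra.
have A1 := Rmult_le_compat_l _ _ _ Hl1 (Rlt_le _ _ Hv1').
have A2 := Rmult_le_compat_l _ _ _ Hl2 (Rlt_le _ _ Hv2').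
have E : lam * (f_l W C1 C2 - eps) + (1 - lam) * (f_l W D1 D2 - eps) =
         lam * f_l W C1 C2 + (1 - lam) * f_l W D1 D2 - eps by ring.
lra.
Qed.
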